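(* Let $p$ be an odd prime, $k\ge1$, $s\ge2$, $0\le l<p^k$ with $l=\alpha p+\beta$ ($0\le\alpha<p^{k-1}$, $0\le\beta\le p-1$), and let $0\le t'\le p-1$, $0\le\beta'\le p-1$. Define $$m_{2s-1}=p^k(p-1)-\big((p-1)(\alpha+p^{k-1}t')+\beta\big),\quad m_{2s}=p^kt',\quad m_{2s+1}=p^k(p-1)-\big((p-1)l+\beta'\big),$$ and $n_j=p^k(p-1)-m_j$ for $j\in\{2s-1,2s,2s+1\}$. Say ''there is a descent at $2s-1$'' if $m_{2s-1}>m_{2s}$ and $n_{2s-1}<n_{2s}$, and ''there is a descent at $2s$'' if $m_{2s}>m_{2s+1}$ and $n_{2s}<n_{2s+1}$. Then, with $j^k_t=t\sum_{\iota=0}^{k-1}p^\iota$: (1) if $l<\frac{p^k-1}{2}$, there is a descent at $2s-1$ if and only if $0\le t'\le\frac{p-1}{2}$ (for every $\beta'$); (2) if $l\ge\frac{p^k-1}{2}$, there is a descent at $2s-1$ if and only if $0\le t'<\frac{p-1}{2}$ (for every $\beta'$); (3) if $1\le t\le p-1$ and $j^k_{t-1}<l<j^k_t$, there is a descent at $2s$ if and only if $p-t\le t'\le p-1$ (for every $\beta'$); (4) if $0\le t\le p-1$ and $l=j^k_t$, then there is a descent at $2s$ if and only if $p-t\le t'\le p-1$ when $\beta'\le t$, and if and only if $p-t-1\le t'\le p-1$ when $\beta'>t$.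
   Context: Interpretation (not needed for the arithmetic claim): in the $p$-Bratteli diagram whose vertices are hook partitions, $m_{2s-1},m_{2s},m_{2s+1}$ are the numbers of horizontal nodes of the last three blocks (each of total size $p^k(p-1)$, $n_j$ being the number of vertical nodes) added along a path which passes, in column $k$, through a vertex indexed $l+p^kt'$ on floor $2(k+s)-1$, then the vertex indexed $l$ on floor $2(k+s)$, and ends at the vertex indexed $pl+\beta'$ on floor $2(k+s)+1$; a descent at position $j$ means block $j$ exceeds block $j+1$ in the sense $m_j>m_{j+1}$, $n_j<n_{j+1}$. *)

(* Defs.v *)
From mathcomp Require Import all_boot all_order all_algebra.
Set Implicit Arguments. Unset Strict Implicit. Unset Printing Implicit Defensive.
Import Order.TTheory GRing.Theory Num.Theory.

(* Block size p^k (p-1); m_j = horizontal nodes, n_j = p^k(p-1) - m_j.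
   Values are taken in int so that no truncated subtraction is involved. *)
Definition blk (p k : nat) : int := ((p ^ k * (p - 1))%N)%:Z.

Definition m_odd (p k alpha beta t' : nat) : int :=
  (blk p k - (((p - 1) * (alpha + p ^ (k - 1) * t') + beta)%N)%:Z)%R.
Definition m_even (p k t' : nat) : int := ((p ^ k * t')%N)%:Z.
Definition m_next (p k l beta' : nat) : int :=
  (blk p k - (((p - 1) * l + beta')%N)%:Z)%R.

Definition n_of (p k : nat) (m : int) : int := (blk p k - m)%R.

Definition descent (p k : nat) (m m' : int) : Prop :=
  (m' < m)%R /\ (n_of p k m < n_of p k m')%R.

Definition jkt (p k t : nat) : nat := t * \sum_(i < k) p ^ i.

(* Main.v *)
Require Import Defs.
From mathcomp Require Import all_boot all_order all_algebra.
From mathcomp Require Import zify.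
Import Order.TTheory GRing.Theory Num.Theory.
Lemma descE p k m m' : descent p k m m' <-> (m' < m)%R.
Proof. rewrite /descent /n_of; split; [case=> //|move=> H; split=>//]; lia. Qed.
Lemma oddE p k a b t : descent p k (m_odd p k a b t) (m_even p k t) <->
  (p^k*t + ((p-1)*(a+p^(k-1)*t) + b) < p^k*(p-1))%N.
Proof. rewrite descE /m_odd /m_even /blk. lia. Qed.
Lemma nextE p k l b t : descent p k (m_even p k t) (m_next p k l b) <->
  (p^k*(p-1) < p^k*t + ((p-1) * l + b))%N.
Proof. rewrite descE /m_next /m_even /blk. lia. Qed.

Lemma part12 h q a b t : 1 <= h -> 1 <= q -> odd q -> b <= 2*h ->
  let p := 2*h+1 in
  (((p*a + b) < (p*q - 1) %/ 2 ->
   (p*q*t + ((p-1)*(a+q*t) + b) < p*q*(p-1) <-> t <= (p-1)%/2))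
  /\ ((p*q - 1) %/ 2 <= p*a+b -> p*a+b < p*q ->
   (p*q*t + ((p-1)*(a+q*t) + b) < p*q*(p-1) <-> t < (p-1)%/2))).
Proof.
move=> h1 q1 qo bL p; rewrite {}/p.
have hD : (2*h+1-1) %/ 2 = h by lia.
rewrite hD addnK.
have PD : ((2*h+1)*q-1) %/ 2 = q*h + (q-1)%/2.
  rewrite mulnDl mul1n mulnAC -mulnA; lia.
rewrite PD; split.
- move=> lL.
  have K1 : 2*h*a + b < q*h.
    rewrite ltnNge; apply/negP => C.
    have A : 2*a + 3 <= q by lia.
    have : h*(2*a+3) <= h*q by apply: leq_mul => //; lia.
    lia.
  split.
  + move=> D; rewrite leqNgt; apply/negP => T.
    have X1 : q*(h+1) <= q*t by apply: leq_mul => //; lia.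
    have X2 : h*(q*(h+1)) <= h*(q*t) by apply: leq_mul => //; lia.
    lia.
  + move=> T.
    have X1 : q*t <= q*h by apply: leq_mul => //; lia.
    have X2 : h*(q*t) <= h*(q*h) by apply: leq_mul => //; lia.
    lia.
- move=> lL lU.
  have K1 : q*h <= 2*h*a + b.
    rewrite leqNgt; apply/negP => C.
    have A : q + 1 <= 2*a by move: (odd_double_half q); rewrite qo; lia.
    have : h*(q+1) <= h*(2*a) by apply: leq_mul => //; lia.
    lia.
  split.
  + move=> D; rewrite ltnNge; apply/negP => T.
    have X1 : q*h <= q*t by apply: leq_mul => //; lia.
    have X2 : h*(q*h) <= h*(q*t) by apply: leq_mul => //; lia.
    lia.
  + move=> T.
    have X1 : q*(t+1) <= q*h by apply: leq_mul => //; lia.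
    have X2 : h*(q*(t+1)) <= h*(q*h) by apply: leq_mul => //; lia.
    lia.
Qed.
Lemma p3 r Q S l b u t0 : r <= Q -> r*S = Q -> b <= r -> t0 < r ->
  t0*S < l < (t0+1)*S -> ((Q+1)*u < r * l+b <-> u <= t0).
Proof.
move=> rQ HS bL tL /andP[l1 l2].
have Y1 : r*(t0*S+1) <= r * l by apply: leq_mul => //; lia.
have Y2 : r*(l+1) <= r*((t0+1)*S) by apply: leq_mul => //; lia.
have E : r*(t0*S) = t0*Q by rewrite mulnCA HS.
have E' : r*((t0+1)*S) = (t0+1)*Q by rewrite mulnCA HS.
split => H.
- rewrite leqNgt; apply/negP => U.
  have : (Q+1)*(t0+1) <= (Q+1)*u by apply: leq_mul => //; lia.
  lia.
- have : (Q+1)*u <= (Q+1)*t0 by apply: leq_mul.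
  lia.
Qed.
Lemma p4 r Q S b u t : r <= Q -> r*S = Q -> t <= r -> b <= r ->
  ((Q+1)*u < r*(t*S)+b <-> (if b <= t then u < t else u <= t)).
Proof.
move=> rQ HS tL bL.
have E : r*(t*S) = t*Q by rewrite mulnCA HS.
rewrite E; case: ifP => bt; split => H.
- rewrite ltnNge; apply/negP => U.
  have : (Q+1)*t <= (Q+1)*u by apply: leq_mul.
  lia.
- have : (Q+1)*(u+1) <= (Q+1)*t by apply: leq_mul => //; lia.
  lia.
- rewrite leqNgt; apply/negP => U.
  have : (Q+1)*(t+1) <= (Q+1)*u by apply: leq_mul => //; lia.
  lia.
- have : (Q+1)*u <= (Q+1)*t by apply: leq_mul.
  lia.
Qed.
Theorem mainTheorem3 (p k s l alpha beta t' beta' : nat) :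
  prime p -> odd p -> 1 <= k -> 2 <= s ->
  l < p ^ k -> l = alpha * p + beta -> alpha < p ^ (k - 1) -> beta <= p - 1 ->
  t' <= p - 1 -> beta' <= p - 1 ->
  (* (1) *)
  (l < (p ^ k - 1) %/ 2 ->
     (descent p k (m_odd p k alpha beta t') (m_even p k t') <-> t' <= (p - 1) %/ 2))
  /\
  (* (2) *)
  ((p ^ k - 1) %/ 2 <= l ->
     (descent p k (m_odd p k alpha beta t') (m_even p k t') <-> t' < (p - 1) %/ 2))
  /\
  (* (3) *)
  (forall t : nat, 1 <= t <= p - 1 -> jkt p k (t - 1) < l < jkt p k t ->
     (descent p k (m_even p k t') (m_next p k l beta') <-> p - t <= t' <= p - 1))
  /\
  (* (4) *)
  (forall t : nat, t <= p - 1 -> l = jkt p k t ->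
     (beta' <= t ->
        (descent p k (m_even p k t') (m_next p k l beta') <-> p - t <= t' <= p - 1))
     /\
     (t < beta' ->
        (descent p k (m_even p k t') (m_next p k l beta') <-> p - t - 1 <= t' <= p - 1))).
Proof.
move=> pr op k1 s2 lP lE aL bL tL b'L.
have p2 := prime_gt1 pr.
have HP : p ^ k = p * p ^ (k - 1) by rewrite -expnS; congr (_ ^ _); lia.
have q1 : 1 <= p ^ (k - 1) by rewrite expn_gt0; lia.
have qo : odd (p ^ (k - 1)) by rewrite oddX op orbT.
have ph : p = 2 * p./2 + 1 by move: (odd_double_half p); rewrite op; lia.
have h1 : 1 <= p./2 by lia.
have Pp : p <= p ^ k by rewrite HP; apply: leq_pmulr.
have HS : (p - 1) * (\sum_(i < k) p ^ i) = p ^ k - 1.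
  by move: (predn_exp p k); lia.
move: (@part12 (p./2) (p ^ (k - 1)) alpha beta t' h1 q1 qo ltac:(lia)) => /= [A12 B12].
rewrite -ph in A12 B12.
split; [|split; [|split]].
- move=> H; rewrite oddE HP; apply: A12; rewrite [p * alpha]mulnC -lE -?HP //.
- move=> H; rewrite oddE HP; apply: B12; rewrite [p * alpha]mulnC -lE -?HP //.
- move=> t /andP[t1 tp] Hl.
  rewrite nextE.
  have := p3 (p - 1) (p ^ k - 1) (\sum_(i < k) p ^ i) l beta' (p - 1 - t') (t - 1).
  rewrite /jkt in Hl.
  have -> : t - 1 + 1 = t by clear -t1; lia.
  move=> /(_ ltac:(clear -Pp; lia) HS b'L ltac:(clear -tp t1; lia) Hl) E.
  have -> : p ^ k * (p - 1) = p ^ k * t' + p ^ k * (p - 1 - t') by rewrite -mulnDr; congr (_ * _); clear -tL; lia.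
  rewrite (_ : p ^ k - 1 + 1 = p ^ k) in E; last by clear -Pp p2; lia.
  rewrite ltn_add2l; apply: (iff_trans E); clear -tp t1 tL; lia.
- move=> t tp Hl.
  have := p4 (p - 1) (p ^ k - 1) (\sum_(i < k) p ^ i) beta' (p - 1 - t') t.
  move=> /(_ ltac:(clear -Pp; lia) HS ltac:(clear -tp; lia) b'L) E.
  rewrite (_ : p ^ k - 1 + 1 = p ^ k) in E; last by clear -Pp p2; lia.
  rewrite nextE Hl /jkt.
  have -> : p ^ k * (p - 1) = p ^ k * t' + p ^ k * (p - 1 - t') by rewrite -mulnDr; congr (_ * _); clear -tL; lia.
  rewrite ltn_add2l; split => bt; apply: (iff_trans E); rewrite ?bt /=;
    [|rewrite leqNgt bt /=]; clear -tp tL bt p2; lia.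
Qed.
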